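(* Let $k\ge 2$, $q\in\{1,\dots,k-1\}$, $n\ge 3$ and $i\ge 1$ be integers, and let $\alpha(k)$ be the restricted period of the Fibonacci sequence modulo $k$. Consider the cylindrical Lights Out game on a board with $i$ rows and $n$ columns whose lights have $k$ states, with every light initially in the same state $k-q$. If $i\equiv 0 \pmod{\alpha(k)}$ or $i\equiv -1 \pmod{\alpha(k)}$, then the game is one-pass solvable.
   Context: Fibonacci numbers: $F_0=0$, $F_1=1$, $F_i=F_{i-1}+F_{i-2}$. The restricted period $\alpha(k)$ is the least positive integer $m$ such that $F_m\equiv 0\pmod k$. Cylindrical Lights Out game: a grid of buttons with $i$ rows (numbered $1,\dots,i$ from top to bottom) and $n$ columns, whose left and right sides are identified, so column $1$ and column $n$ are adjacent; rows do not wrap around. Each button has a light whose state is an element of $\mathbb{Z}/k\mathbb{Z}$, state $0$ meaning ''off''. Pressing a button once adds $1 \pmod k$ to the state of its own light and to the states of the lights orthogonally adjacent to it (above, below, left, right, where they exist, with columns taken cyclically). One-pass chasing: for $r=2,3,\dots,i$ in turn, press each button in row $r$ the number of times in $\{0,\dots,k-1\}$ needed to bring the light directly above it (in row $r-1$) to state $0$. The game is one-pass solvable if after this procedure all lights on the board are in state $0$. *)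

(* Defs.v *)
From mathcomp Require Import all_boot.
Unset Printing Implicit Defensive.

Fixpoint fib (m : nat) : nat :=
  match m with
  | 0 => 0
  | 1 => 1
  | (m'.+1 as p).+1 => fib p + fib m'
  end.

Definition is_restricted_period (k a : nat) : Prop :=
  [/\ 0 < a, k %| fib a & forall m, 0 < m < a -> ~~ (k %| fib m)].

(* Board of the cylindrical Lights Out game with i rows (numbered 1..i)
   and n columns (indexed by 'I_n, cyclically adjacent).
   A board state gives the light state (a natural number in [0, k)) of each
   button (row r, column c); values at rows outside 1..i are irrelevant. *)
Definition board (n : nat) := nat -> 'I_n -> nat.

Definition affects (i n : nat) (r : nat) (c : 'I_n) (r' : nat) (c' : 'I_n) : bool :=
  (0 < r' <= i) &&
  (((r' == r) && [|| c' == c, c' == ordS c | c' == ord_pred c])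
   || ((c' == c) && ((r' == r.+1) || (r'.+1 == r)))).

Definition press (k i n : nat) (r : nat) (c : 'I_n) (s : board n) : board n :=
  fun r' c' => if affects i n r c r' c' then (s r' c' + 1) %% k else s r' c'.

Definition needed (k x : nat) : nat := (k - x %% k) %% k.

Definition chase_button (k i n : nat) (s : board n) (r : nat) (c : 'I_n) : board n :=
  iter (needed k (s r.-1 c)) (press k i n r c) s.

Definition chase_row (k i n : nat) (s : board n) (r : nat) : board n :=
  foldl (fun s' c => chase_button k i n s' r c) s (enum 'I_n).

Definition one_pass_chase (k i n : nat) (s : board n) : board n :=
  foldl (chase_row k i n) s (iota 2 i.-1).

Definition one_pass_solvable (k i n : nat) (s : board n) : Prop :=
  forall (r : nat) (c : 'I_n), 0 < r <= i -> one_pass_chase k i n s r c = 0.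

Definition const_board (n x : nat) : board n := fun _ _ => x.

(* Main.v *)
Require Import Defs.
From mathcomp Require Import all_boot all_order all_algebra.
From mathcomp Require Import ring zify.
Import GRing.Theory.


Lemma fibSS m : fib m.+2 = fib m.+1 + fib m. Proof. by []. Qed.

Lemma fib_add m n : fib (m + n).+1 = fib m.+1 * fib n.+1 + fib m * fib n.
Proof.
elim: m n => [|m IH] n; first by rewrite add0n /= mul1n mul0n addn0.
rewrite addSnnS IH !fibSS; ring.
Qed.

Lemma dvd_fib_mul k a t : k %| fib a -> k %| fib (a * t).
Proof.
move=> h; elim: t => [|t IH]; first by rewrite muln0.
case: a h IH => [|a'] h IH; first by rewrite mul0n.
rewrite mulnS addnC addnS fib_add.
by apply: dvdn_add; [apply: dvdn_mull | apply: dvdn_mulr].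
Qed.

Section RingA.
Local Open Scope ring_scope.
Lemma cassini (R : comRingType) m :
  (fib m)%:R * (fib m.+2)%:R - (fib m.+1)%:R ^+ 2 = (-1) ^+ m.+1 :> R.
Proof.
elim: m => [|m IH]; first by rewrite /= mul0r sub0r expr1 expr1n.
rewrite [(-1) ^+ _]exprS -IH !fibSS !natrD; ring.
Qed.

End RingA.


Lemma neededP k y : 0 < k -> (needed k y + y) %% k = 0.
Proof.
move=> k0; rewrite /needed modnDml -modnDmr subnK ?modnn //.
exact: ltnW (ltn_pmod _ k0).
Qed.

Lemma needed_mod k y : needed k (y %% k) = needed k y.
Proof. by rewrite /needed modn_mod. Qed.

Fixpoint pp (k x r : nat) : nat :=
  match r with
  | 0 => 0
  | 1 => 0
  | (r'.+1 as r1).+1 => needed k (x + pp k x r' + 3 * pp k x r1)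
  end.

Lemma ppSS k x r : pp k x r.+2 = needed k (x + pp k x r + 3 * pp k x r.+1).
Proof. by []. Qed.

Section RingB.
Local Open Scope ring_scope.

Lemma neededZ (k y : nat) : (1 < k)%N -> (needed k y)%:R = - (y%:R) :> 'Z_k.
Proof.
move=> k1; apply/eqP; rewrite -subr_eq0 opprK -natrD -Zp_nat_mod //.
by rewrite neededP ?(ltnW k1).
Qed.

Lemma pp_closed2 (k x r : nat) : (1 < k)%N ->
  (pp k x r)%:R = (-1) ^+ r.+1 * (fib r.-1 * fib r * x)%:R :> 'Z_k
   /\ (pp k x r.+1)%:R = (-1) ^+ r.+2 * (fib r * fib r.+1 * x)%:R :> 'Z_k.
Proof.
move=> k1; elim: r => [|r [IH1 IH2]]; first by split; rewrite /= !mul0n mulr0.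
split=> //.
rewrite ppSS neededZ // !natrD IH1 IH2.
have hs : (-1) ^+ r * (-1) ^+ r = 1 :> 'Z_k.
  by rewrite -exprMn mulrNN mulr1 expr1n.
case: r IH1 IH2 hs => [|m] _ _ hs.
  rewrite /=. by rewrite !mul0n mul1n addn0; ring.
have cas := cassini 'Z_k m.
rewrite succnK !fibSS in cas *.
rewrite !natrM !natrD in cas *.
set s := (-1) ^+ m.+1 in hs cas *.
have e2 : (-1) ^+ m.+2 = - s :> 'Z_k by rewrite exprS -/s mulN1r.
have e3 : (-1) ^+ m.+3 = s :> 'Z_k by rewrite exprS e2 mulN1r opprK.
have e4 : (-1) ^+ m.+4 = - s :> 'Z_k by rewrite exprS e3 mulN1r.
rewrite e2 e3 e4.
apply/eqP; rewrite -subr_eq0; apply/eqP.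
set a := (fib m)%:R in cas *; set b := (fib m.+1)%:R in cas *; set X := x%:R.
transitivity (- X * (1 - s * (a * (b + a) - b ^+ 2))); first by ring.
by rewrite cas hs subrr mulr0.
Qed.

End RingB.


Ltac nb := repeat match goal with
  | |- context [?a == ?b] =>
      let t := type of a in unify t nat;
      first [ rewrite (_ : (a == b) = true); last by lia
            | rewrite (_ : (a == b) = false); last by lia ]
  | |- context [?a <= ?b] =>
      first [ rewrite (_ : (a <= b) = true); last by lia
            | rewrite (_ : (a <= b) = false); last by lia ]
  end.

Lemma iter_press k i n r c s r' c' m : s r' c' < k ->
  iter m (press k i n r c) s r' c' =
  if affects i n r c r' c' then (s r' c' + m) %% k else s r' c'.
Proof.
move=> hs; elim: m => [|m IH]; first by case: ifP; rewrite // addn0 modn_small.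
rewrite iterS {1}/press IH; case: (affects i n r c r' c') => //.
by rewrite modnDml addn1 addnS.
Qed.

Lemma affectsE i n r c r' (c' : 'I_n) : affects i n r c r' c' =
  (0 < r' <= i) && (if r' == r then [|| c' == c, c' == ordS c | c' == ord_pred c]
                    else (c' == c) && ((r' == r.+1) || (r'.+1 == r))).
Proof.
rewrite /affects; case: (r' =P r) => [->|ne] /=.
  by nb; rewrite andbF orbF.
by [].
Qed.

Lemma valS n (c : 'I_n) : nat_of_ord (ordS c) = if c.+1 == n then 0 else c.+1.
Proof.
rewrite /ordS /=; case: eqP => [->|ne]; first by rewrite modnn.
by rewrite modn_small //; have := ltn_ord c; lia.
Qed.

Lemma valP n (c : 'I_n) : nat_of_ord (ord_pred c) = if nat_of_ord c == 0 then n.-1 else (nat_of_ord c).-1.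
Proof.
rewrite /ord_pred /=; have := ltn_ord c; case: eqP => [->|ne] hc.
  by rewrite add0n modn_small //; lia.
rewrite (_ : (c + n).-1 = (c.-1) + n); last by lia.
by rewrite modnDr modn_small //; lia.
Qed.

Lemma cnt_step n (c0 c' : 'I_n) : 2 < n ->
  (c0 == c') + (c0 == ord_pred c') + (c0 == ordS c') =
  [|| c' == c0, c' == ordS c0 | c' == ord_pred c0] :> nat.
Proof.
move=> n3.
have e1 : (c' == ordS c0) = (c0 == ord_pred c').
  by apply/eqP/eqP => [->|->]; rewrite ?ordSK ?ord_predK.
have e2 : (c' == ord_pred c0) = (c0 == ordS c').
  by apply/eqP/eqP => [->|->]; rewrite ?ordSK ?ord_predK.
have d1 : ord_pred c' != c'.
  by apply/eqP => /(congr1 (@nat_of_ord n)); rewrite valP; have := ltn_ord c'; case: eqP; lia.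
have d2 : ordS c' != c'.
  by apply/eqP => /(congr1 (@nat_of_ord n)); rewrite valS; have := ltn_ord c'; case: eqP; lia.
have d3 : ordS c' != ord_pred c'.
  apply/eqP => /(congr1 (@nat_of_ord n)); rewrite valS valP; have := ltn_ord c'.
  by case: eqP; case: eqP; lia.
rewrite e1 e2 (eq_sym c').
have f1 := negbTE d1; have f2 := negbTE d2; have f3 := negbTE d3.
rewrite eq_sym in d1; rewrite eq_sym in d2; rewrite eq_sym in d3.
have g1 := negbTE d1; have g2 := negbTE d2; have g3 := negbTE d3.
case: (c0 =P c') => [->|_]; first by rewrite ?eqxx g1 g2.
case: (c0 =P ord_pred c') => [->|_]; first by rewrite ?eqxx ?f3 ?g3.
by case: (c0 =P ordS c').
Qed.



Definition cnt {n} (c' : 'I_n) (S : seq 'I_n) : nat :=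
  (c' \in S) + (ord_pred c' \in S) + (ordS c' \in S).

Definition midval k x j {n} (S : seq 'I_n) r' (c' : 'I_n) : nat :=
  if r' < j.+1 then 0
  else if r' == j.+1 then (if c' \in S then 0 else (x + pp k x j + 3 * pp k x j.+1) %% k)
  else if r' == j.+2 then (x + pp k x j.+1 + pp k x j.+2 * cnt c' S) %% k
  else if r' == j.+3 then (x + pp k x j.+2 * (c' \in S)) %% k
  else x.

Definition Mid k i n x j (S : seq 'I_n) (s : board n) :=
  forall r' c', 0 < r' <= i -> s r' c' = midval k x j S r' c'.

Lemma midval_lt k x j n S r' c' : 0 < k -> x < k -> midval k x j (n:=n) S r' c' < k.
Proof.
move=> k0 xk; rewrite /midval.
by repeat case: ifP => _; rewrite ?ltn_pmod.
Qed.

Lemma inS n (c0 y : 'I_n) S : c0 \notin S ->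
  nat_of_bool (y \in c0 :: S) = (c0 == y) + (y \in S).
Proof.
move=> h; rewrite in_cons eq_sym; case: (c0 =P y) => [<-|] //=.
by rewrite (negbTE h).
Qed.

Lemma cnt_cons n (c0 c' : 'I_n) S : 2 < n -> c0 \notin S ->
  cnt c' (c0 :: S) = cnt c' S + [|| c' == c0, c' == ordS c0 | c' == ord_pred c0].
Proof.
move=> n3 h; rewrite -cnt_step // /cnt !inS //.
by move: (c0 == c') (c' \in S) (c0 == ord_pred c') (ord_pred c' \in S) (c0 == ordS c') (ordS c' \in S) => [] [] [] [] [] [].
Qed.

Lemma mid_step k i n x j S s c0 : 2 < n -> 0 < k -> x < k -> j.+2 <= i ->
  c0 \notin S -> Mid k i n x j S s ->
  Mid k i n x j (c0 :: S) (chase_button k i n s j.+2 c0).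
Proof.
move=> n3 k0 xk ji c0S H r' c' hr'.
have hv : s j.+2.-1 c0 = (x + pp k x j + 3 * pp k x j.+1) %% k.
  by rewrite H /midval; nb; rewrite ?(negbTE c0S).
rewrite /chase_button hv iter_press; last by rewrite H // midval_lt.
rewrite needed_mod -ppSS H // affectsE hr' andTb.
set P := pp k x j.+2.
have hP : (x + pp k x j + 3 * pp k x j.+1 + P) %% k = 0.
  by rewrite addnC /P ppSS neededP.
have [h|h] := leqP r' j.
  by rewrite /midval; nb; rewrite ?andbF.
case: (r' =P j.+1) => [->|ne1].
  rewrite /midval; nb; rewrite in_cons.
  case: (c' =P c0) => [->|_] /=; last by case: (c0 \in S).
  by rewrite (negbTE c0S) modnDml.
case: (r' =P j.+2) => [->|ne2].
  rewrite /midval; nb; rewrite cnt_cons //.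
  case: ifP => _ /=; last by rewrite addn0.
  by rewrite modnDml /P mulnDr muln1 addnA.
case: (r' =P j.+3) => [->|ne3].
  rewrite /midval; nb; rewrite andbT inS //.
  rewrite (eq_sym c'); case: (c0 =P c') => [<-|ne].
    by rewrite (negbTE c0S) modnDml /P muln0 muln1 addn0.
  by rewrite add0n.
by rewrite /midval; nb; rewrite andbF.
Qed.



Definition stageval k x r r' :=
  if r' < r then 0 else if r' == r then (x + pp k x r.-1 + 3 * pp k x r) %% k
  else if r' == r.+1 then (x + pp k x r) %% k else x.

Definition Stage k i n x r (s : board n) :=
  forall r' (c' : 'I_n), 0 < r' <= i -> s r' c' = stageval k x r r'.

Lemma mid_fold k i n x j (l S : seq 'I_n) s : 2 < n -> 0 < k -> x < k -> j.+2 <= i ->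
  uniq l -> all (fun c => c \notin S) l -> Mid k i n x j S s ->
  Mid k i n x j (catrev l S) (foldl (fun s' c => chase_button k i n s' j.+2 c) s l).
Proof.
move=> n3 k0 xk ji; elim: l S s => [|c0 l IH] S s //= /andP[c0l ul] /andP[c0S al] H.
apply: IH => //; last exact: mid_step.
apply/allP => c cl; rewrite in_cons negb_or (allP al c cl) andbT.
by apply/eqP => e; move: c0l; rewrite -e cl.
Qed.

Lemma stage_mid k i n x j s : x < k -> Stage k i n x j.+1 s -> Mid k i n x j [::] s.
Proof.
move=> xk H r' c' hr'; rewrite H // /stageval /midval.
have [h|h] := leqP r' j; first by nb.
case: (r' =P j.+1) => [->|ne1]; first by nb.
case: (r' =P j.+2) => [->|ne2]; first by nb; rewrite /cnt /= muln0 addn0.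
case: (r' =P j.+3) => [->|ne3]; first by nb; rewrite muln0 addn0 modn_small.
by nb.
Qed.

Lemma mid_stage k i n x j S s : (forall c, c \in S) -> Mid k i n x j S s ->
  Stage k i n x j.+2 s.
Proof.
move=> hS H r' c' hr'; rewrite H // /stageval /midval.
have [h|h] := leqP r' j; first by nb.
case: (r' =P j.+1) => [->|ne1]; first by nb; rewrite hS.
case: (r' =P j.+2) => [->|ne2]; first by nb; rewrite /cnt !hS mulnC.
case: (r' =P j.+3) => [->|ne3]; first by nb; rewrite hS muln1.
by nb.
Qed.

Lemma row_step k i n x j s : 2 < n -> 0 < k -> x < k -> j.+2 <= i ->
  Stage k i n x j.+1 s -> Stage k i n x j.+2 (chase_row k i n s j.+2).
Proof.
move=> n3 k0 xk ji H.
apply: (@mid_stage _ _ _ _ _ (catrev (enum 'I_n) [::])).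
  by move=> c; rewrite catrevE cats0 mem_rev mem_enum.
apply: mid_fold => //.
all: try exact: enum_uniq.
all: try by apply/allP.
exact: stage_mid.
Qed.

Lemma rows_step k i n x m j s : 2 < n -> 0 < k -> x < k ->
  Stage k i n x j.+1 s -> j.+1 + m <= i ->
  Stage k i n x (j.+1 + m) (foldl (chase_row k i n) s (iota j.+2 m)).
Proof.
move=> n3 k0 xk; elim: m j s => [|m IH] j s H hm; first by rewrite addn0.
rewrite /= -addSnnS; apply: IH; last by rewrite addSnnS.
by apply: row_step => //; lia.
Qed.

Lemma stage1 k i n x : x < k -> Stage k i n x 1 (const_board n x).
Proof.
move=> xk r' c' hr'; rewrite /stageval /const_board /=.
have [h|h] := leqP r' 0; first lia.
case: (r' =P 1) => [->|ne1] /=; first by rewrite ?muln0 !addn0 modn_small.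
case: (r' =P 2) => [->|ne2] /=; first by rewrite ?muln0 !addn0 modn_small.
by nb.
Qed.


Lemma final_row k x i' : 1 < k ->
  k %| fib i'.+1 * fib i'.+2 ->
  (x + pp k x i' + 3 * pp k x i'.+1) %% k = 0.
Proof.
move=> k1 hd.
have h0 : ((x + pp k x i' + 3 * pp k x i'.+1)%:R = 0 :> 'Z_k)%R.
  have e := @neededZ k (x + pp k x i' + 3 * pp k x i'.+1) k1.
  rewrite -ppSS in e.
  have [e1 _] := pp_closed2 k x i'.+2 k1.
  rewrite e1 in e.
  have z : ((fib i'.+2.-1 * fib i'.+2 * x)%:R = 0 :> 'Z_k)%R.
    have [t ->] : exists t, fib i'.+2.-1 * fib i'.+2 * x = t * k.
      by exists ((fib i'.+1 * fib i'.+2) %/ k * x); rewrite [in RHS]mulnAC divnK.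
    by rewrite natrM pchar_Zp // GRing.mulr0.
  rewrite z GRing.mulr0 in e.
  by apply/eqP; rewrite -GRing.oppr_eq0 -e.
by have := congr1 (@nat_of_ord _) h0; rewrite val_Zp_nat.
Qed.

Theorem theorem3 (k q n i a : nat) :
  2 <= k -> 1 <= q <= k - 1 -> 3 <= n -> 1 <= i ->
  is_restricted_period k a ->
  (i %% a = 0 \/ i.+1 %% a = 0) ->
  one_pass_solvable k i n (const_board n (k - q)).
Proof.
move=> k2 hq n3 i1 [a0 ka _] hi.
have xk : k - q < k by lia.
move=> r c hr.
have St := @rows_step k i n (k - q) i.-1 0 (const_board n (k - q)) n3
   (ltnW k2) xk (@stage1 k i n (k - q) xk) ltac:(lia).
rewrite /one_pass_chase.
rewrite (_ : 1 + i.-1 = i) in St; last by lia.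
rewrite St // /stageval.
case: ltnP => // hri; rewrite (_ : r == i) ?eqxx; last by lia.
case: i i1 hi St hr hri => [|i'] // _ hi _ _ _.
rewrite succnK; apply: final_row => //.
case: hi => /eqP; rewrite -/(dvdn a _) => hd.
  by apply: dvdn_mulr; rewrite -(divnK hd) mulnC; apply: dvd_fib_mul.
by apply: dvdn_mull; rewrite -(divnK hd) mulnC; apply: dvd_fib_mul.
Qed.
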